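(* Let $p_0,p_1,p_2,T>0$, let $\Lambda\subset[0,\infty)$ have finite measure, $q_k=p_k^{-1/2}$ ($k=0,1,2$), and $$p=p_0\chi_{(-\infty,-T/2]}+p_1\chi_{(-T/2,T/2]}+p_2\chi_{(T/2,\infty)}.$$ Set $$C=\tfrac1{16q_0^2}\Big[\big(1+\tfrac{q_0}{q_1}\big)^2\big(1+\tfrac{q_1}{q_2}\big)^2+\big(1-\tfrac{q_0}{q_1}\big)^2\big(1-\tfrac{q_1}{q_2}\big)^2\Big],\quad K=\tfrac1{8q_0^2}\big(1-\tfrac{q_0^2}{q_1^2}\big)\big(1-\tfrac{q_1^2}{q_2^2}\big),\quad \zeta=2q_1T.$$ Then for all $u>0$, $\kappa(u):=\frac{|a_0^+(u^2)|^2}{q_0^2}=C+K\cos(\zeta u)$, and hence $$J(s):=\frac1{2\pi}\int_{\Lambda^{1/2}}\frac{e^{isu}}{\kappa(u)}\,du=\frac1{2\pi}\int_{\Lambda^{1/2}}\frac{e^{isu}}{C+K\cos\zeta u}\,du,\quad s\in\mathbb{R}.$$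
   Context: $\Lambda^{1/2}=\{u\ge0:u^2\in\Lambda\}$. Here $n=2$, $t_1=-T/2$, $t_2=T/2$. For $z\in\mathbb{C}\setminus(-\infty,0]$ with principal square root $\sqrt z$ and $k=1,2$ let $$L_k(z)=\frac12\begin{bmatrix}\left(1+\frac{q_k}{q_{k-1}}\right)e^{it_k(q_{k-1}-q_k)\sqrt z} & \left(1-\frac{q_k}{q_{k-1}}\right)e^{-it_k(q_{k-1}+q_k)\sqrt z}\\ \left(1-\frac{q_k}{q_{k-1}}\right)e^{it_k(q_{k-1}+q_k)\sqrt z} & \left(1+\frac{q_k}{q_{k-1}}\right)e^{-it_k(q_{k-1}-q_k)\sqrt z}\end{bmatrix},$$ $R_k=L_k^{-1}$, and define $(a_2^+,b_2^+)=(1,0)$, $(a_l^+,b_l^+)^T=R_{l+1}(z)(a_{l+1}^+,b_{l+1}^+)^T$ for $l=1,0$. *)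

(* Defs.v *)
From HB Require Import structures.
From mathcomp Require Import all_boot all_order all_algebra.
From mathcomp Require Import all_classical all_reals all_analysis.
From mathcomp Require Import complex.
Set Implicit Arguments. Unset Strict Implicit. Unset Printing Implicit Defensive.
Import Order.TTheory GRing.Theory Num.Theory.
Local Open Scope ring_scope.
Local Open Scope complex_scope.

Section Defs.
Variable R : realType.

Definition cexp (w : R[i]) : R[i] :=
  Complex (expR (complex.Re w) * cos (complex.Im w))
          (expR (complex.Re w) * sin (complex.Im w)).

Definition iC : R[i] := Complex 0 1.

Definition qof (pk : R) : R := (Num.sqrt pk)^-1.

(* L_k(z) with qa = q_{k-1}, qb = q_k, t = t_k; sqrtc = principal square root *)
Definition Lmat (qa qb t : R) (z : R[i]) : 'M[R[i]]_2 :=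
  let w := sqrtc z in
  let cp : R[i] := ((1 + qb / qa) / 2)%:C in
  let cm : R[i] := ((1 - qb / qa) / 2)%:C in
  \matrix_(i < 2, j < 2)
    if (val i == 0%N) && (val j == 0%N) then cp * cexp (iC * (t * (qa - qb))%:C * w)
    else if val i == 0%N then cm * cexp (- iC * (t * (qa + qb))%:C * w)
    else if val j == 0%N then cm * cexp (iC * (t * (qa + qb))%:C * w)
    else cp * cexp (- iC * (t * (qa - qb))%:C * w).

Definition a2vec : 'cV[R[i]]_2 := \col_(i < 2) (if val i == 0%N then 1 else 0).

(* n = 2, t_1 = -T/2, t_2 = T/2; R_k = L_k^{-1};
   (a_1,b_1)^T = R_2 (a_2,b_2)^T, (a_0,b_0)^T = R_1 (a_1,b_1)^T *)
Definition abvec (p0 p1 p2 T : R) (l : nat) (z : R[i]) : 'cV[R[i]]_2 :=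
  let q0 := qof p0 in let q1 := qof p1 in let q2 := qof p2 in
  let R1 := invmx (Lmat q0 q1 (- (T / 2)) z) in
  let R2 := invmx (Lmat q1 q2 (T / 2) z) in
  match l with
  | 0%N => R1 *m (R2 *m a2vec)
  | 1%N => R2 *m a2vec
  | _ => a2vec
  end.

Definition a_plus (p0 p1 p2 T : R) (l : nat) (z : R[i]) : R[i] :=
  abvec p0 p1 p2 T l z ord0 ord0.

Definition cnorm2 (w : R[i]) : R := complex.Re w ^+ 2 + complex.Im w ^+ 2.

Definition kappa (p0 p1 p2 T u : R) : R :=
  cnorm2 (a_plus p0 p1 p2 T 0 ((u ^+ 2)%:C)) / (qof p0) ^+ 2.

Definition Cconst (p0 p1 p2 : R) : R :=
  let q0 := qof p0 in let q1 := qof p1 in let q2 := qof p2 in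
  (16 * q0 ^+ 2)^-1 *
  ((1 + q0 / q1) ^+ 2 * (1 + q1 / q2) ^+ 2 + (1 - q0 / q1) ^+ 2 * (1 - q1 / q2) ^+ 2).

Definition Kconst (p0 p1 p2 : R) : R :=
  let q0 := qof p0 in let q1 := qof p1 in let q2 := qof p2 in
  (8 * q0 ^+ 2)^-1 * (1 - q0 ^+ 2 / q1 ^+ 2) * (1 - q1 ^+ 2 / q2 ^+ 2).

Definition zeta (p1 T : R) : R := 2 * qof p1 * T.

Definition sqrt_set (Lam : set R) : set R := [set u | 0 <= u /\ Lam (u ^+ 2)].

End Defs.

(* Main.v *)
Require Import Defs.
From HB Require Import structures.
From mathcomp Require Import all_boot all_order all_algebra.
From mathcomp Require Import all_classical all_reals all_analysis.
From mathcomp Require Import complex.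
From mathcomp Require Import ring lra.
Import Order.TTheory GRing.Theory Num.Theory.
Local Open Scope ring_scope.
Set Implicit Arguments. Unset Strict Implicit. Unset Printing Implicit Defensive.

Section G.
Variable F : fieldType.
Definition mat2 (a b c d : F) : 'M[F]_2 := \matrix_(i < 2, j < 2)
  if (val i == 0%N) && (val j == 0%N) then a
  else if val i == 0%N then b else if val j == 0%N then c else d.

Lemma mat2E a b c d : mat2 a b c d = \matrix_(i < 2, j < 2)
  if (val i == 0%N) && (val j == 0%N) then a
  else if val i == 0%N then b else if val j == 0%N then c else d.
Proof. by []. Qed.

Lemma inv_of (A M : 'M[F]_2) : A *m M = 1%:M -> invmx A = M.
Proof.
move=> h; have [uA _] := mulmx1_unit h.
by rewrite -[invmx A]mulmx1 -h mulmxA mulVmx ?mul1mx.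
Qed.

Lemma mat2_inv a b c d : a * d - b * c != 0 ->
  invmx (mat2 a b c d) = mat2 (d / (a * d - b * c)) (- b / (a * d - b * c))
     (- c / (a * d - b * c)) (a / (a * d - b * c)).
Proof.
move=> h; apply: inv_of; apply/matrixP => i j.
rewrite !mxE !big_ord_recr big_ord0 /= add0r !mxE.
case: i => [[|[|i]] Hi] //; case: j => [[|[|j]] Hj] //=; field; done.
Qed.

Lemma mat2_col a b c d (v : 'cV[F]_2) :
  (mat2 a b c d *m v) ord0 ord0 = a * v ord0 ord0 + b * v (Ordinal (isT : (1 < 2)%N)) ord0.
Proof. by rewrite !mxE !big_ord_recr big_ord0 /= add0r !mxE /=; congr (_ * _ + _ * _); congr (v _ _); apply: val_inj. Qed.

Lemma mat2_col1 a b c d (v : 'cV[F]_2) :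
  (mat2 a b c d *m v) (Ordinal (isT : (1 < 2)%N)) ord0 = c * v ord0 ord0 + d * v (Ordinal (isT : (1 < 2)%N)) ord0.
Proof. by rewrite !mxE !big_ord_recr big_ord0 /= add0r !mxE /=; congr (_ * _ + _ * _); congr (v _ _); apply: val_inj. Qed.
End G.

Section C.
Variable R : realType.
Local Open Scope complex_scope.
Definition E (t : R) : R[i] := Complex (cos t) (sin t).

Lemma EM a b : E a * E b = E (a + b).
Proof. rewrite /E cosD sinD; simpc; congr Complex; ring. Qed.

Lemma EN a : E a * E (- a) = 1.
Proof. by rewrite EM subrr /E cos0 sin0. Qed.

Goal True. done. Qed.
Lemma cexpP x v : cexp (iC _ * x%:C * v%:C) = E (x * v).
Proof. rewrite /cexp /iC /E /=; congr Complex; rewrite !(mulr0, mul0r, oppr0, mul1r, subr0, addr0, add0r, subrr, expR0) //.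
Qed.

Lemma cexpN x v : cexp (- iC _ * x%:C * v%:C) = E (- (x * v)).
Proof. rewrite /cexp /iC /E /=; congr Complex; rewrite !(mulr0, mul0r, mul1r, mulN1r, subr0, addr0, add0r, subrr, oppr0, expR0, mulNr) //. Qed.

Lemma rCE (k a : R) : k%:C * E a = Complex (k * cos a) (k * sin a).
Proof. rewrite /E; simpc; done. Qed.

Lemma rCV (k : R) : (k%:C)^-1 = (k^-1)%:C :> R[i].
Proof. by rewrite fmorphV. Qed.

Lemma LmatE qa qb t u : 0 <= u ->
  Lmat qa qb t ((u ^+ 2)%:C) =
  mat2 (((1 + qb / qa) / 2)%:C * E (t * (qa - qb) * u))
       (((1 - qb / qa) / 2)%:C * E (- (t * (qa + qb) * u)))
       (((1 - qb / qa) / 2)%:C * E (t * (qa + qb) * u))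
       (((1 + qb / qa) / 2)%:C * E (- (t * (qa - qb) * u))).
Proof.
move=> u0; rewrite /Lmat sqrtc_sqrtr; last by rewrite lecR sqr_ge0.
rewrite /= sqrtr_sqr ger0_norm // !cexpP !cexpN.
rewrite mat2E; apply/matrixP => i j; rewrite !mxE //.
Qed.

Lemma detL cp cm A B : (cp%:C * E A) * (cp%:C * E (-A)) - (cm%:C * E (-B)) * (cm%:C * E B)
   = (cp ^+ 2 - cm ^+ 2)%:C.
Proof.
have h := EN (-B); rewrite opprK in h.
rewrite mulrACA EN mulrACA h !mulr1 -!rmorphM -rmorphB /= !expr2 //.
Qed.

Lemma a0_eq (q0 q1 q2 T u : R) : 0 < q0 -> 0 < q1 -> 0 < q2 -> 0 <= u ->
  (invmx (Lmat q0 q1 (- (T / 2)) ((u ^+ 2)%:C)) *m (invmx (Lmat q1 q2 (T / 2) ((u ^+ 2)%:C)) *m a2vec R)) ord0 ord0 =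
  ((q1 / q0 * (q2 / q1))^-1)%:C *
   ((((1 + q1 / q0) / 2) * ((1 + q2 / q1) / 2))%:C * E (- (- (T / 2) * (q0 - q1) * u) + - (T / 2 * (q1 - q2) * u))
   + (((1 - q1 / q0) / 2) * ((1 - q2 / q1) / 2))%:C * E (- (- (T / 2) * (q0 + q1) * u) + (T / 2 * (q1 + q2) * u))).
Proof.
move=> h0 h1 h2 u0; rewrite !LmatE //.
have dn : forall qa qb : R, 0 < qa -> 0 < qb -> ((1 + qb / qa) / 2) ^+ 2 - ((1 - qb / qa) / 2) ^+ 2 = qb / qa.
  by move=> qa qb ha hb; field; rewrite gt_eqF.
have nz : forall qa qb : R, 0 < qa -> 0 < qb -> (qb / qa)%:C != 0 :> R[i].
  by move=> qa qb ha hb; rewrite (inj_eq (fmorph_inj _)) mulf_neq0 ?invr_eq0 ?gt_eqF.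
rewrite !mat2_inv ?detL ?dn ?nz //.
rewrite mat2_col mat2_col mat2_col1 !mxE /=.
rewrite !(mulr1, mulr0, addr0).
rewrite fmorphV !rmorphM /= -!EM.
have := nz _ _ h0 h1; have := nz _ _ h1 h2.
move: (_ / _)%:C (_ / _)%:C => x y hx hy.
field.
by rewrite !fmorph_eq0 !gt_eqF.
Qed.

Lemma combE (k P Q a b : R) : k%:C * (P%:C * E a + Q%:C * E b) =
  Complex (k * P * cos a + k * Q * cos b) (k * P * sin a + k * Q * sin b) :> R[i].
Proof. apply/eqP; rewrite eq_complex /=; apply/andP; split; apply/eqP; ring. Qed.

Lemma norm_comb (k P Q a b : R) : (k * P * cos a + k * Q * cos b) ^+ 2 + (k * P * sin a + k * Q * sin b) ^+ 2
  = k ^+ 2 * (P ^+ 2 + Q ^+ 2 + 2 * P * Q * cos (a - b)).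
Proof.
have ha := cos2Dsin2 a; have hb := cos2Dsin2 b; rewrite cosB.
apply/eqP; rewrite -subr_eq0; apply/eqP.
transitivity (k ^+ 2 * P ^+ 2 * (cos a ^+ 2 + sin a ^+ 2 - 1) + k ^+ 2 * Q ^+ 2 * (cos b ^+ 2 + sin b ^+ 2 - 1)).
  ring.
by rewrite ha hb subrr !mulr0 addr0.
Qed.

Lemma kappa_q (q0 q1 q2 T u : R) : 0 < q0 -> 0 < q1 -> 0 < q2 -> 0 <= u ->
  cnorm2 ((invmx (Lmat q0 q1 (- (T / 2)) ((u ^+ 2)%:C)) *m (invmx (Lmat q1 q2 (T / 2) ((u ^+ 2)%:C)) *m a2vec R)) ord0 ord0) / q0 ^+ 2
  = (16 * q0 ^+ 2)^-1 *
  ((1 + q0 / q1) ^+ 2 * (1 + q1 / q2) ^+ 2 + (1 - q0 / q1) ^+ 2 * (1 - q1 / q2) ^+ 2)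
  + (8 * q0 ^+ 2)^-1 * (1 - q0 ^+ 2 / q1 ^+ 2) * (1 - q1 ^+ 2 / q2 ^+ 2) * cos (2 * q1 * T * u).
Proof.
move=> h0 h1 h2 u0; rewrite a0_eq // combE /cnorm2 /= norm_comb.
set a := (X in cos X).
have -> : a = - (2 * q1 * T * u) by rewrite /a; field.
rewrite cosN.
field.
by rewrite !gt_eqF.
Qed.

Lemma qof_gt0 (p : R) : 0 < p -> 0 < qof p.
Proof. by move=> hp; rewrite /qof invr_gt0 sqrtr_gt0. Qed.

Lemma kappa_eq (p0 p1 p2 T u : R) : 0 < p0 -> 0 < p1 -> 0 < p2 -> 0 <= u ->
  kappa p0 p1 p2 T u = Cconst p0 p1 p2 + Kconst p0 p1 p2 * cos (zeta p1 T * u).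
Proof.
move=> h0 h1 h2 u0.
rewrite /kappa /a_plus /abvec /Cconst /Kconst /zeta /=.
by rewrite kappa_q ?qof_gt0 // mulrA.
Qed.
End C.
Unset Implicit Arguments.

Local Open Scope classical_set_scope.

(* J(s) = (1/2pi) \int e^{isu}/kappa(u) du is stated via its real part
   (cos) and imaginary part (sin), each as a Lebesgue integral. *)
Theorem lemma4p1 (R : realType) (p0 p1 p2 T : R) (Lam : set R) :
  0 < p0 -> 0 < p1 -> 0 < p2 -> 0 < T ->
  measurable Lam -> Lam `<=` [set x | 0 <= x] ->
  (lebesgue_measure Lam < +oo)%E ->
  (forall u : R, 0 < u ->
     kappa p0 p1 p2 T u = Cconst p0 p1 p2 + Kconst p0 p1 p2 * cos (zeta p1 T * u)) /\
  (forall s : R,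
     (\int[lebesgue_measure]_(u in sqrt_set Lam)
        ((2 * pi)^-1 * cos (s * u) / kappa p0 p1 p2 T u)%:E
      = \int[lebesgue_measure]_(u in sqrt_set Lam)
        ((2 * pi)^-1 * cos (s * u)
          / (Cconst p0 p1 p2 + Kconst p0 p1 p2 * cos (zeta p1 T * u)))%:E)%E /\
     (\int[lebesgue_measure]_(u in sqrt_set Lam)
        ((2 * pi)^-1 * sin (s * u) / kappa p0 p1 p2 T u)%:E
      = \int[lebesgue_measure]_(u in sqrt_set Lam)
        ((2 * pi)^-1 * sin (s * u)
          / (Cconst p0 p1 p2 + Kconst p0 p1 p2 * cos (zeta p1 T * u)))%:E)%E).
Proof.
move=> h0 h1 h2 _ _ _ _; split.
  by move=> u /ltW u0; apply: kappa_eq.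
move=> s; split; apply: eq_integral => u; rewrite inE => -[u0 _];
  by rewrite kappa_eq.
Qed.
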